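(* Let $n,d\ge1$, $K\in\{1,\dots,d\}$, $0<\mu\le L\le L_{\max}\le nL$ and $r\in[0,1]$. Let the worker compressors be Rand$K_\omega$ and the server compressor Top$K_\alpha$ with (i) $K_\omega=K$ and $K_\alpha=\min\{\lceil\frac{1-r}{r}K\rceil,d\}$ if $r\in[0,\frac12]$, (ii) $K_\omega=\min\{\lceil\frac{r}{1-r}K\rceil,d\}$ and $K_\alpha=K$ if $r\in(\frac12,1]$; correspondingly $\omega=\frac{d}{K_\omega}-1$ and $\alpha=\frac{K_\alpha}{d}$. With $K^r=(1-r)K_\omega+rK_\alpha$, $\mu^r_{\omega,\alpha}=rd/K^r$ and $$\mathfrak m^r_{\mathrm{realistic}}=K^r\Big(\sqrt{\tfrac{L\max\{\omega+1,\mu^r_{\omega,\alpha}\}}{\alpha\mu}}+\sqrt{\tfrac{L_{\max}\omega\max\{\omega+1,\mu^r_{\omega,\alpha}\}}{n\mu}}+\tfrac1\alpha+\omega+\mu^r_{\omega,\alpha}\Big)+d,$$ we have $\mathfrak m^r_{\mathrm{realistic}}=\widetilde{\mathcal O}(\mathfrak m_{\mathrm{AGD}})$ with $\mathfrak m_{\mathrm{AGD}}=d\sqrt{L/\mu}$, i.e. $\mathfrak m^r_{\mathrm{realistic}}\le C\,d\sqrt{L/\mu}$ for a universal constant $C$ (up to logarithmic factors).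
   Context: Rand$K$: the unbiased compressor that keeps $K$ uniformly random coordinates of its input scaled by $d/K$ (variance parameter $\omega=d/K-1$). Top$K$: the biased compressor keeping the $K$ largest-magnitude coordinates (contraction parameter $\alpha=K/d$). $\mathfrak m^r_{\mathrm{realistic}}$ is (up to logarithmic factors) the total communication complexity $(1-r)\cdot(\text{worker-to-server cost})+r\cdot(\text{server-to-worker cost})$ of the method 2Direction for minimizing $f=\frac1n\sum_if_i$ on $\mathbb R^d$ ($f_i$ $L_i$-smooth convex, $L_{\max}=\max_iL_i$, $f$ $L$-smooth and $\mu$-strongly convex), and $d\sqrt{L/\mu}$ is (up to logarithmic factors) that of accelerated gradient descent with uncompressed communication. *)

(* Defs.v *)
From HB Require Import structures.
From mathcomp Require Import all_boot all_order all_algebra.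
From mathcomp Require Import reals.
Set Implicit Arguments. Unset Strict Implicit. Unset Printing Implicit Defensive.
Import Order.TTheory GRing.Theory Num.Theory.
Local Open Scope ring_scope.

(* Convention: at r = 0 the quantity (1-r)/r * K is +oo, so K_alpha = d;
   at r = 1 the quantity r/(1-r) * K is +oo, so K_omega = d. *)
Section Params.
Variable R : realType.
Variables (d K r : R).

Definition K_omega : R :=
  if r <= 2^-1 then K
  else if r == 1 then d
  else Num.min (Num.ceil (r / (1 - r) * K))%:~R d.

Definition K_alpha : R :=
  if r <= 2^-1 then
    (if r == 0 then d else Num.min (Num.ceil ((1 - r) / r * K))%:~R d)
  else K.

Definition omega_p : R := d / K_omega - 1.
Definition alpha_p : R := K_alpha / d.
Definition K_r : R := (1 - r) * K_omega + r * K_alpha.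
Definition mu_r : R := r * d / K_r.
End Params.

Definition m_realistic (R : realType) (n : nat) (d K mu L Lmax r : R) : R :=
  let om := omega_p d K r in
  let al := alpha_p d K r in
  let mr := mu_r d K r in
  K_r d K r *
    (Num.sqrt (L * Num.max (om + 1) mr / (al * mu))
     + Num.sqrt (Lmax * om * Num.max (om + 1) mr / (n%:R * mu))
     + al^-1 + om + mr) + d.

(* Main.v *)
From HB Require Import structures.

Require Import Defs.
From mathcomp Require Import all_boot all_order all_algebra reals.
From mathcomp Require Import ring lra.
Import Order.TTheory GRing.Theory Num.Theory.
Local Open Scope ring_scope.


Lemma minc (R : realType) (x k D : R) : k <= x -> k <= D ->
  let m := Num.min (Num.ceil x)%:~R D in
  [/\ k <= m, m <= D & m < x + 1].
Proof.
move=> hx hD m.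
have c1 := ceil_ge x.
have c2 := ceilB1_lt x.
rewrite intrD /= in c2.
split.
- by rewrite /m le_min hD andbT (le_trans hx).
- by rewrite /m ge_min lexx orbT.
- rewrite /m; apply: (le_lt_trans (y := (Num.ceil x)%:~R)); first by rewrite ge_min lexx.
  move: c2; rewrite -[((-1)%:~R : R)]/(-1 : R) => c2; lra.
Qed.

Lemma params (R : realType) (D k r : R) : 1 <= k -> k <= D -> 0 <= r -> r <= 1 ->
  [/\ k <= K_omega D k r <= D, k <= K_alpha D k r <= D,
      0 < K_r D k r, r * k <= K_r D k r & K_r D k r <= 3 * k].
Proof.
move=> hk hkD hr0 hr1.
rewrite /K_r /K_omega /K_alpha.
case: ifP => hr.
- case: eqP => [->|/eqP r0].
    rewrite !lexx hkD /=; split => //; lra.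
  have rp : 0 < r by rewrite lt_def r0.
  have r2 : 2 * r <= 1.
    by move: hr; rewrite -[X in _ <= X -> _]mul1r ler_pdivlMr // mulrC.
  have r2k : 0 <= (1 - 2 * r) * k by rewrite mulr_ge0 //; lra.
  have hx : k <= (1 - r) / r * k.
    rewrite -{1}[k]mul1r ler_wpM2r ?ler_pdivlMr //; lra.
  have [h1 h2 h3] := minc _ _ _ _ hx hkD.
  set m := Num.min _ _ in h1 h2 h3 *.
  rewrite lexx hkD h1 h2; split => //.
  + have : 0 <= r * m by rewrite mulr_ge0 //; lra. lra.
  + have : 0 <= r * m by rewrite mulr_ge0 //; lra. nra.
  + have e : r * ((1 - r) / r * k + 1) = (1 - r) * k + r.
      by field; rewrite gt_eqF.
    have : r * m <= (1 - r) * k + r.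
      by rewrite -e ler_wpM2l // ltW.
    nra.
- have rh : 2^-1 < r by rewrite ltNge hr.
  have r2 : 1 < 2 * r.
    by move: rh; rewrite -[X in X < _ -> _]mul1r ltr_pdivrMr // mulrC.
  case: eqP => [->|/eqP r1].
    rewrite !lexx hkD /=; split => //; lra.
  have rp : r < 1 by rewrite lt_def eq_sym r1.
  have r2k : 0 <= (2 * r - 1) * k by rewrite mulr_ge0 //; lra.
  have hx : k <= r / (1 - r) * k.
    rewrite -{1}[k]mul1r ler_wpM2r ?ler_pdivlMr //; lra.
  have [h1 h2 h3] := minc _ _ _ _ hx hkD.
  set m := Num.min _ _ in h1 h2 h3 *.
  rewrite lexx hkD h1 h2; split => //.
  + have : 0 <= (1 - r) * m by rewrite mulr_ge0 //; lra. nra.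
  + have : 0 <= (1 - r) * m by rewrite mulr_ge0 //; lra. lra.
  + have e : (1 - r) * (r / (1 - r) * k + 1) = r * k + (1 - r).
      by field; rewrite subr_eq0 eq_sym.
    have : (1 - r) * m <= r * k + (1 - r).
      by rewrite -e ler_wpM2l //; lra.
    nra.
Qed.
Lemma key (R : realType) (nn D k a b Kr r mu L Lmax : R) :
  0 < nn -> 1 <= k -> k <= a -> a <= D -> k <= b -> b <= D -> 0 <= r ->
  0 < Kr -> r * k <= Kr -> Kr <= 3 * k -> 0 < mu -> mu <= L ->
  0 <= Lmax -> Lmax <= nn * L ->
  Kr * (Num.sqrt (L * Num.max (D / a - 1 + 1) (r * D / Kr) / (b / D * mu))
     + Num.sqrt (Lmax * (D / a - 1) * Num.max (D / a - 1 + 1) (r * D / Kr) / (nn * mu))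
     + (b / D)^-1 + (D / a - 1) + r * D / Kr) + D
  <= 16 * D * Num.sqrt (L / mu).
Proof.
move=> hn hk hka haD hkb hbD hr hKr hrK hK3 hmu hmuL hL0 hLn.
have k0 : 0 < k by lra.
have a0 : 0 < a by lra.
have b0 : 0 < b by lra.
have D0 : 0 < D by lra.
set q := D / k.
have q0 : 0 <= q by rewrite divr_ge0 // ltW.
have kq : k * q = D by rewrite /q mulrC divfK // gt_eqF.
have hDa : D / a <= q by rewrite /q ler_pdivrMr // mulrAC ler_pdivlMr // ler_pM2l.
have hDa1 : 0 <= D / a - 1 by rewrite subr_ge0 ler_pdivlMr // mul1r.
have hmr : r * D / Kr <= q.
  by rewrite /q ler_pdivrMr // mulrAC ler_pdivlMr // mulrAC [_ * Kr]mulrC ler_pM2r.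
have hmr0 : 0 <= r * D / Kr by rewrite divr_ge0 ?mulr_ge0 // ltW.
set M := Num.max _ _.
have hM : M <= q by rewrite /M ge_max subrK hDa hmr.
have hM0 : 0 <= M by rewrite /M le_max hmr0 orbT.
have hDb : (b / D)^-1 <= q.
  by rewrite invf_div /q ler_pdivrMr // mulrAC ler_pdivlMr // ler_pM2l.
have Lm0 : 0 < L / mu by rewrite divr_gt0 //; lra.
set s := Num.sqrt (L / mu).
have s1 : 1 <= s by rewrite /s -sqrtr1 ler_sqrt ?ler_pdivlMr ?mul1r; lra.
have sq : forall x, 0 <= x -> Num.sqrt (q ^+ 2 * x) = q * Num.sqrt x.
  by move=> x hx; rewrite sqrtrM ?sqr_ge0 // sqrtr_sqr ger0_norm.
have T1 : Num.sqrt (L * M / (b / D * mu)) <= q * s.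
  rewrite /s -sq; last exact: ltW. rewrite ler_sqrt; last by rewrite mulr_ge0 ?sqr_ge0 // ltW.
  have -> : L * M / (b / D * mu) = (L / mu) * (M * (D / b)).
    by field; rewrite !gt_eqF.
  rewrite expr2 [X in _ <= X]mulrC ler_pM2l // ler_pM //; first by rewrite divr_ge0 ?ltW.
  by rewrite -invf_div.
have T2 : Num.sqrt (Lmax * (D / a - 1) * M / (nn * mu)) <= q * s.
  rewrite /s -sq; last exact: ltW. rewrite ler_sqrt; last by rewrite mulr_ge0 ?sqr_ge0 // ltW.
  have -> : Lmax * (D / a - 1) * M / (nn * mu) = (Lmax / nn / mu) * ((D / a - 1) * M).
    by field; rewrite !gt_eqF.
  have h1 : Lmax / nn / mu <= L / mu.
    by rewrite ler_pM2r ?invr_gt0 // ler_pdivrMr // mulrC.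
  apply: (le_trans (y := (L / mu) * ((D / a - 1) * M))).
    by rewrite ler_wpM2r ?mulr_ge0.
  rewrite expr2 [X in _ <= X]mulrC ler_pM2l // ler_pM //; lra.
have hsum : Num.sqrt (L * M / (b / D * mu))
     + Num.sqrt (Lmax * (D / a - 1) * M / (nn * mu))
     + (b / D)^-1 + (D / a - 1) + r * D / Kr <= q * s + q * s + q + q + q by lra.
have hs0 : 0 <= Num.sqrt (L * M / (b / D * mu)) by apply: sqrtr_ge0.
have hs1 : 0 <= Num.sqrt (Lmax * (D / a - 1) * M / (nn * mu)) by apply: sqrtr_ge0.
have hb0 : 0 <= (b / D)^-1 by rewrite invr_ge0 divr_ge0 ?ltW.
apply: (le_trans (y := 3 * k * (q * s + q * s + q + q + q) + D)).
  rewrite lerD2r; apply: ler_pM; lra.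
have -> : 3 * k * (q * s + q * s + q + q + q) = 3 * (k * q) * (2 * s + 3) by ring.
rewrite kq; nra.
Qed.

Theorem theorem5 :
  exists C : nat, forall (R : realType) (n d K : nat) (mu L Lmax r : R),
    (1 <= n)%N -> (1 <= d)%N -> (1 <= K <= d)%N ->
    0 < mu -> mu <= L -> L <= Lmax -> Lmax <= n%:R * L ->
    0 <= r <= 1 ->
    m_realistic n d%:R K%:R mu L Lmax r <= C%:R * d%:R * Num.sqrt (L / mu).
Proof.
exists 16%N => R n d K mu L Lmax r hn hd /andP[hK1 hKd] hmu hmuL hLL hLn /andP[hr0 hr1].
have hk : 1 <= K%:R :> R by rewrite ler1n.
have hkD : K%:R <= d%:R :> R by rewrite ler_nat.
have [/andP[a1 a2] /andP[b1 b2] kr0 kr1 kr2] := params _ _ _ _ hk hkD hr0 hr1.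
rewrite /m_realistic /omega_p /alpha_p /mu_r /=.
apply: (key _ _ _ K%:R).
- by rewrite ltr0n.
all: try eassumption.
exact: (le_trans (ltW hmu) (le_trans hmuL hLL)).
Qed.
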